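(* Let $\rho$ be a bipartite state and let $\Lambda=\{\Pi_1,\dots\}$ and $\Lambda'=\{\Pi'_1,\dots\}$ be projective measurements on the first and second registers respectively, such that $\mathrm{Tr}[(\Pi_1\otimes\Pi'_1)\rho]\ge1-\varepsilon$. Let $M=\{M_i\}_{i\in\mathcal{I}}$ be a general measurement on the first register, fix $i\in\mathcal{I}$, let $p_i=\mathrm{Tr}[(M_i^\dagger M_i\otimes I)\rho]$ be the probability of outcome $i$, and let $\tau$ be the post-measurement state of the second register after applying $M$ to the first register of $\rho$ and obtaining outcome $i$. Then $\mathrm{Tr}[\Pi'_1\tau]\ge1-\frac{\sqrt{\varepsilon}}{p_i}$. *)

(* Defs.v *)
(* finite-dimensional quantum states over an abstract
   numeric algebraically closed field C (e.g. the complex numbers). *)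
From mathcomp Require Import all_boot all_order all_algebra.
From mathcomp Require Export mxtens.
Set Implicit Arguments. Unset Strict Implicit. Unset Printing Implicit Defensive.
Import Order.TTheory GRing.Theory Num.Theory.
Local Open Scope ring_scope.

Section Quantum.
Variable C : numClosedFieldType.

Definition adj {m n} (A : 'M[C]_(m, n)) : 'M[C]_(n, m) := map_mx Num.conj A^T.

Definition psd {n} (A : 'M[C]_n) : Prop :=
  adj A = A /\ forall v : 'cV[C]_n, 0 <= (adj v *m A *m v) 0 0.

Definition is_state {n} (rho : 'M[C]_n) : Prop := psd rho /\ \tr rho = 1.

Definition proj_meas {I : finType} {n} (P : I -> 'M[C]_n) : Prop :=
  (forall k, adj (P k) = P k /\ P k *m P k = P k) /\ \sum_k P k = 1%:M.

Definition gen_meas {J : finType} {n} (M : J -> 'M[C]_n) : Prop :=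
  \sum_j adj (M j) *m M j = 1%:M.

Definition ptrace1 {m n} (X : 'M[C]_(m * n)) : 'M[C]_n :=
  \matrix_(j, k) \sum_(a < m) X (mxtens_index (a, j)) (mxtens_index (a, k)).

Definition outcome_prob {J : finType} {m n} (M : J -> 'M[C]_m) (i : J)
  (rho : 'M[C]_(m * n)) : C :=
  \tr ((adj (M i) *m M i *t (1%:M : 'M[C]_n)) *m rho).

Definition post_state2 {J : finType} {m n} (M : J -> 'M[C]_m) (i : J)
  (rho : 'M[C]_(m * n)) : 'M[C]_n :=
  (outcome_prob M i rho)^-1 *:
    ptrace1 ((M i *t (1%:M : 'M[C]_n)) *m rho *m adj (M i *t (1%:M : 'M[C]_n))).
End Quantum.

(* Main.v *)
Require Import Defs.
From mathcomp Require Import all_boot all_order all_algebra ring.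
Import Order.TTheory GRing.Theory Num.Theory.
Local Open Scope ring_scope.

Section H.
Variable C : numClosedFieldType.

Lemma adjM k l p (A : 'M[C]_(k, l)) (B : 'M[C]_(l, p)) : adj (A *m B) = adj B *m adj A.
Proof.
apply/matrixP=> i j; rewrite !mxE rmorph_sum; apply: eq_bigr=> s _.
by rewrite !mxE rmorphM mulrC.
Qed.

Lemma adjD k l (A B : 'M[C]_(k, l)) : adj (A + B) = adj A + adj B.
Proof. by apply/matrixP=> i j; rewrite !mxE rmorphD. Qed.

Lemma adjB k l (A B : 'M[C]_(k, l)) : adj (A - B) = adj A - adj B.
Proof. by apply/matrixP=> i j; rewrite !mxE rmorphB. Qed.

Lemma adj1 k : adj (1%:M : 'M[C]_k) = 1%:M.
Proof. by apply/matrixP=> i j; rewrite !mxE eq_sym; case: eqP=> _; rewrite ?rmorph1 ?rmorph0. Qed.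

Lemma adjK k l (A : 'M[C]_(k, l)) : adj (adj A) = A.
Proof. by apply/matrixP=> i j; rewrite !mxE conjCK. Qed.

Lemma adjT k l p q (A : 'M[C]_(k, l)) (B : 'M[C]_(p, q)) : adj (A *t B) = adj A *t adj B.
Proof. by apply/matrixP=> i j; rewrite !mxE rmorphM. Qed.

Lemma tensDl k l p q (A B : 'M[C]_(k, l)) (D : 'M[C]_(p, q)) : (A + B) *t D = A *t D + B *t D.
Proof. by apply/matrixP=> i j; rewrite !mxE mulrDl. Qed.
Lemma tensBl k l p q (A B : 'M[C]_(k, l)) (D : 'M[C]_(p, q)) : (A - B) *t D = A *t D - B *t D.
Proof. by apply/matrixP=> i j; rewrite !mxE mulrBl. Qed.
Lemma tensBr k l p q (A : 'M[C]_(k, l)) (B D : 'M[C]_(p, q)) : A *t (B - D) = A *t B - A *t D.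
Proof. by apply/matrixP=> i j; rewrite !mxE mulrBr. Qed.
Lemma tens_suml (J : finType) (P : pred J) k l p q (A : J -> 'M[C]_(k, l)) (D : 'M[C]_(p, q)) :
  (\sum_(j | P j) A j) *t D = \sum_(j | P j) (A j *t D).
Proof.
apply/matrixP=> i j; rewrite !mxE !summxE mulr_suml; apply: eq_bigr=> s _.
by rewrite !mxE.
Qed.

Lemma tens11 k l : (1%:M : 'M[C]_k) *t (1%:M : 'M[C]_l) = 1%:M.
Proof.
apply/matrixP=> i j.
case: (mxtens_indexP i)=> a b; case: (mxtens_indexP j)=> c d.
rewrite tensmxE !mxE (inj_eq (can_inj (@mxtens_indexK _ _))) xpair_eqE.
by case: eqP=> _; case: eqP=> _ /=; rewrite ?mulr1 ?mulr0 ?mul0r.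
Qed.

Lemma sum_idx k l (F : 'I_(k * l) -> C) :
  \sum_r F r = \sum_(a < k) \sum_(b < l) F (mxtens_index (a, b)).
Proof.
rewrite (reindex (@mxtens_index k l)) /=; last first.
  by apply: onW_bij; exact: (Bijective (@mxtens_indexK k l) (@mxtens_unindexK k l)).
by rewrite pair_big /=; apply: eq_bigr=> -[a b].
Qed.

Lemma ptrace_tr k l (Q : 'M[C]_l) (X : 'M[C]_(k * l)) :
  \tr (Q *m ptrace1 X) = \tr ((1%:M *t Q) *m X).
Proof.
rewrite /mxtrace sum_idx.
have E : forall a j, ((1%:M *t Q) *m X) (mxtens_index (a, j)) (mxtens_index (a, j))
   = \sum_(s < l) Q j s * X (mxtens_index (a, s)) (mxtens_index (a, j)).
  move=> a j; rewrite mxE sum_idx (bigD1 a) //= [X in _ + X]big1 ?addr0.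
    by apply: eq_bigr=> s _; rewrite tensmxE mxE eqxx mul1r.
  move=> b /negPf nb; apply: big1=> s _; by rewrite tensmxE mxE eq_sym nb /= !mul0r.
under [RHS]eq_bigr=> a _ do under eq_bigr=> j _ do rewrite E.
rewrite exchange_big; apply: eq_bigr=> j _.
rewrite mxE exchange_big; apply: eq_bigr=> s _; rewrite mxE mulr_sumr.
by [].
Qed.

Lemma T_adj N p (rho : 'M[C]_N) (B : 'M[C]_(p, N)) :
  psd rho -> 0 <= \tr (adj B *m B *m rho).
Proof.
move=> [_ Hr]; rewrite -mulmxA mxtrace_mulC /mxtrace; apply: sumr_ge0=> r _.
have := Hr (adj (row r B)); rewrite adjK.
suff -> : (row r B *m rho *m adj (row r B)) 0 0 = (B *m rho *m adj B) r r by [].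
rewrite !mxE; apply: eq_bigr=> s _; rewrite !mxE; congr (_ * _).
by apply: eq_bigr=> t _; rewrite !mxE.
Qed.

Lemma projC k (A : 'M[C]_k) : adj A = A -> A *m A = A ->
  adj (1%:M - A) = 1%:M - A /\ (1%:M - A) *m (1%:M - A) = 1%:M - A.
Proof.
move=> hA AA; split; first by rewrite adjB adj1 hA.
by rewrite mulmxBl !mulmxBr !mul1mx ?mulmx1 AA subrr subr0.
Qed.

End H.

Theorem mainTheorem9 (C : numClosedFieldType) (m n : nat)
  (rho : 'M[C]_(m * n)) (I I' J : finType)
  (Pi : I -> 'M[C]_m) (Pi' : I' -> 'M[C]_n) (i1 : I) (i1' : I')
  (M : J -> 'M[C]_m) (i : J) (eps : C) :
  is_state rho -> proj_meas Pi -> proj_meas Pi' ->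
  1 - eps <= \tr ((Pi i1 *t Pi' i1') *m rho) ->
  gen_meas M ->
  0 < outcome_prob M i rho ->
  1 - sqrtC eps / outcome_prob M i rho <= \tr (Pi' i1' *m post_state2 M i rho).
Proof.
move=> [Hpsd Htr] [HP1 _] [HP2 _] Heps HM Hp.
set E := adj (M i) *m M i.
pose f := fun (A : 'M[C]_m) (B : 'M[C]_n) => \tr ((A *t B) *m rho).
have fBl A B D : f (A - B) D = f A D - f B D.
  by rewrite /f tensBl mulmxBl raddfB.
have fBr A B D : f A (B - D) = f A B - f A D.
  by rewrite /f tensBr mulmxBl raddfB.
have proj_ge0 A B : adj A = A -> A *m A = A -> adj B = B -> B *m B = B -> 0 <= f A B.
  move=> hA AA hB BB; rewrite /f.
  have -> : A *t B = adj (A *t B) *m (A *t B) by rewrite adjT hA hB tensmx_mul AA BB.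
  exact: T_adj.
have f11 : f 1%:M 1%:M = 1 by rewrite /f tens11 mul1mx.
have Hptr : \tr (Pi' i1' *m post_state2 M i rho) = (outcome_prob M i rho)^-1 * f E (Pi' i1').
  rewrite /post_state2 -scalemxAr mxtraceZ ptrace_tr; congr (_ * _).
  rewrite /f !mulmxA mxtrace_mulC !mulmxA adjT adj1 !tensmx_mul mul1mx !mulmx1.
  by [].
have Hp_def : outcome_prob M i rho = f E 1%:M by [].
rewrite Hptr Hp_def; rewrite Hp_def in Hp.
have [hPa hPb] := HP1 i1.
have [hQa hQb] := HP2 i1'.
have [hPa' hPb'] := @projC _ _ _ hPa hPb.
have [hQa' hQb'] := @projC _ _ _ hQa hQb.
have [h1a h1b] : adj (1%:M : 'M[C]_n) = 1%:M /\ (1%:M : 'M[C]_n) *m 1%:M = 1%:M.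
  by rewrite adj1 mul1mx.
have H1E : 0 <= f (1%:M - E) (1%:M - Pi' i1').
  have -> : 1%:M - E = \sum_(j | j != i) adj (M j) *m M j.
    by rewrite -HM (bigD1 i) //= addrC addrK.
  rewrite /f tens_suml mulmx_suml raddf_sum; apply: sumr_ge0=> j _.
  have -> : (adj (M j) *m M j) *t (1%:M - Pi' i1') =
     adj (M j *t (1%:M - Pi' i1')) *m (M j *t (1%:M - Pi' i1')).
    by rewrite adjT hQa' tensmx_mul hQb'.
  exact: T_adj.
set e' := 1 - f (Pi i1) (Pi' i1').
have ht : 0 <= f (Pi i1) (Pi' i1') by apply: proj_ge0.
have h1 : 0 <= e'.
  have -> : e' = f (1%:M - Pi i1) 1%:M + f (Pi i1) (1%:M - Pi' i1').
    by rewrite /e' fBl fBr -{1}f11; ring.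
  by apply: addr_ge0; apply: proj_ge0.
have h2 : e' <= eps.
  rewrite -subr_ge0; rewrite -subr_ge0 in Heps.
  by have -> : eps - e' = \tr ((Pi i1 *t Pi' i1') *m rho) - (1 - eps) by rewrite /e' /f; ring.
have h3 : 0 <= e' - (f E 1%:M - f E (Pi' i1')).
  have -> : e' - (f E 1%:M - f E (Pi' i1')) =
      f (1%:M - Pi i1) (Pi' i1') + f (1%:M - E) (1%:M - Pi' i1').
    by rewrite /e' !fBl !fBr -{1}f11; ring.
  by apply: addr_ge0 => //; apply: proj_ge0.
have eps0 : 0 <= eps by apply: le_trans h2.
have hs : e' <= sqrtC eps.
  have s0 : 0 <= sqrtC eps by rewrite sqrtC_ge0.
  case/orP: (real_leVge (ger0_real eps0) (@real1 C)) => he.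
    apply: (le_trans h2).
    have s1 : sqrtC eps <= 1 by rewrite -(sqrtC1 C) ler_sqrtC ?nnegrE.
    by rewrite -{1}(sqrtCK eps) expr2 ler_piMr.
  apply: (@le_trans _ _ 1).
    by rewrite -subr_ge0; have -> : 1 - e' = f (Pi i1) (Pi' i1') by rewrite /e'; ring.
  by rewrite -(sqrtC1 C) ler_sqrtC ?nnegrE.
have p0 : f E 1%:M != 0 by rewrite gt_eqF.
rewrite -subr_ge0.
have -> : (f E 1%:M)^-1 * f E (Pi' i1') - (1 - sqrtC eps / f E 1%:M) =
   ((e' - (f E 1%:M - f E (Pi' i1'))) + (sqrtC eps - e')) / f E 1%:M.
  by field.
by apply: divr_ge0; [apply: addr_ge0 => //; rewrite subr_ge0 | apply: ltW].
Qed.
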